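(* Let $S=\{(x_i,y_i)\}_{i=1}^n$ with $0\le x_1<x_2<\dots<x_n$, and let $\hat f_S$ be the minimum-norm interpolating two-layer ReLU network for $S$ (defined in the context). Then: (i) $\hat f_S(x)=g_1(x)$ for $x\in(-\infty,x_2)$; (ii) $\hat f_S(x)=g_{n-1}(x)$ for $x\in[x_{n-1},\infty)$; (iii) for each $i\in\{2,\dots,n-2\}$ and $x\in[x_i,x_{i+1})$: if $\mathsf{curv}(x_i)=\mathsf{curv}(x_{i+1})=+1$ then $\max\{g_{i-1}(x),g_{i+1}(x)\}\le\hat f_S(x)\le g_i(x)$; if $\mathsf{curv}(x_i)=\mathsf{curv}(x_{i+1})=-1$ then $\min\{g_{i-1}(x),g_{i+1}(x)\}\ge\hat f_S(x)\ge g_i(x)$; otherwise (i.e. $\mathsf{curv}(x_i)=0$, or $\mathsf{curv}(x_{i+1})=0$, or $\mathsf{curv}(x_i)\ne\mathsf{curv}(x_{i+1})$) $\hat f_S(x)=g_i(x)$.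
   Context: A two-layer ReLU network with skip connection is $f_{\theta,a_0,b_0}(x)=\sum_{j=1}^m a_j(w_jx+b_j)_++a_0x+b_0$ with $\theta=\{a_j,w_j,b_j\}_{j=1}^m\in\mathbb{R}^{3m}$ and arbitrary width $m$. The min-norm interpolator $\hat f_S$ is the (unique) minimizer of $\|\theta\|_2^2$ over all $m,\theta,a_0,b_0$ subject to $f_{\theta,a_0,b_0}(x_i)=y_i$ for all $i\in[n]$ (the weights $a_0,b_0$ are not penalized). For $i\in[n-1]$, $g_i$ is the affine function through $(x_i,y_i)$ and $(x_{i+1},y_{i+1})$, and $\delta_i$ is its slope; set $\delta_0:=\delta_1$, $\delta_n:=\delta_{n-1}$. For $i\in[n]$, $\mathsf{curv}(x_i)=+1$ if $\delta_i>\delta_{i-1}$, $0$ if $\delta_i=\delta_{i-1}$, and $-1$ if $\delta_i<\delta_{i-1}$. *)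

(* Defs.v *)
From Stdlib Require Import Reals Lra ZArith.
Open Scope R_scope.

Fixpoint fsum (m : nat) (F : nat -> R) : R :=
  match m with
  | O => 0
  | S k => fsum k F + F k
  end.

Definition relu (t : R) : R := Rmax 0 t.

Record net := mkNet {
  width : nat;
  na : nat -> R;
  nw : nat -> R;
  nb : nat -> R;
  na0 : R;
  nb0 : R }.

Definition net_eval (N : net) (t : R) : R :=
  fsum (width N) (fun j => na N j * relu (nw N j * t + nb N j)) + na0 N * t + nb0 N.

(* ||theta||_2^2 ; a0, b0 are not penalized *)
Definition net_cost (N : net) : R :=
  fsum (width N) (fun j => na N j ^ 2 + nw N j ^ 2 + nb N j ^ 2).

Definition interpolates (n : nat) (x y : nat -> R) (N : net) : Prop :=
  forall i, (1 <= i <= n)%nat -> net_eval N (x i) = y i.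

Definition min_norm_interp (n : nat) (x y : nat -> R) (N : net) : Prop :=
  interpolates n x y N /\
  forall N', interpolates n x y N' -> net_cost N <= net_cost N'.

Definition slope (x y : nat -> R) (i : nat) : R :=
  (y (S i) - y i) / (x (S i) - x i).

Definition gseg (x y : nat -> R) (i : nat) (t : R) : R :=
  y i + slope x y i * (t - x i).

(* delta_i with the conventions delta_0 := delta_1, delta_n := delta_{n-1} *)
Definition delta (n : nat) (x y : nat -> R) (i : nat) : R :=
  if Nat.eqb i 0 then slope x y 1
  else if Nat.eqb i n then slope x y (n - 1)
  else slope x y i.

Definition curv (n : nat) (x y : nat -> R) (i : nat) : Z :=
  if Rlt_dec (delta n x y (i - 1)) (delta n x y i) then 1%Z
  else if Rlt_dec (delta n x y i) (delta n x y (i - 1)) then (-1)%Z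
  else 0%Z.

(* Main.v *)
Require Import Defs.
From Stdlib Require Import Reals ZArith Lra Psatz Lia Classical.
Open Scope R_scope.

Definition om (c : R) : R := sqrt (1 + c^2).

Lemma om_pos c : 0 < om c.
Proof. unfold om. apply sqrt_lt_R0. nra. Qed.

Lemma om_sq c : om c * om c = 1 + c^2.
Proof. unfold om. apply sqrt_sqrt. nra. Qed.

Lemma om_gt_abs c : Rabs c < om c.
Proof.
  pose proof (om_pos c). pose proof (om_sq c).
  destruct (Rcase_abs c); [rewrite Rabs_left by lra | rewrite Rabs_right by lra]; nra.
Qed.

Lemma lt_sq_pos a b : 0 <= a -> 0 < b -> a*a < b*b -> a < b.
Proof. intros. nra. Qed.
Lemma le_sq_pos a b : 0 <= a -> 0 <= b -> a*a <= b*b -> a <= b.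
Proof. intros. nra. Qed.

Section FS.
Lemma fsum_ext m F G : (forall j, (j < m)%nat -> F j = G j) -> fsum m F = fsum m G.
Proof. induction m; simpl; intros H; auto. rewrite IHm by (intros; apply H; lia). rewrite H by lia. auto. Qed.

Lemma fsum_plus m F G : fsum m (fun j => F j + G j) = fsum m F + fsum m G.
Proof. induction m; simpl; [lra|]. rewrite IHm. lra. Qed.

Lemma fsum_minus m F G : fsum m (fun j => F j - G j) = fsum m F - fsum m G.
Proof. induction m; simpl; [lra|]. rewrite IHm. lra. Qed.

Lemma fsum_scal m c F : fsum m (fun j => c * F j) = c * fsum m F.
Proof. induction m; simpl; [lra|]. rewrite IHm. lra. Qed.

Lemma fsum_zero m : fsum m (fun _ => 0) = 0.
Proof. induction m; simpl; [lra|]. rewrite IHm. lra. Qed.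

Lemma fsum_le m F G : (forall j, (j < m)%nat -> F j <= G j) -> fsum m F <= fsum m G.
Proof. induction m; simpl; intros H; [lra|]. pose proof (H m ltac:(lia)). pose proof (IHm ltac:(intros; apply H; lia)). lra. Qed.

Lemma fsum_lt m F G j0 : (forall j, (j < m)%nat -> F j <= G j) -> (j0 < m)%nat -> F j0 < G j0 -> fsum m F < fsum m G.
Proof.
  induction m; simpl; intros H Hj Hlt; [lia|].
  destruct (Nat.eq_dec j0 m).
  - subst. pose proof (fsum_le m F G ltac:(intros; apply H; lia)). lra.
  - pose proof (IHm ltac:(intros; apply H; lia) ltac:(lia) Hlt). pose proof (H m ltac:(lia)). lra.
Qed.

Lemma fsum_abs m F : Rabs (fsum m F) <= fsum m (fun j => Rabs (F j)).
Proof. induction m; simpl. rewrite Rabs_R0; lra. eapply Rle_trans. apply Rabs_triang. lra. Qed.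

Lemma fsum_delta m j0 d : (j0 < m)%nat -> fsum m (fun j => if Nat.eqb j j0 then d else 0) = d.
Proof.
  induction m; simpl; intros H; [lia|].
  destruct (Nat.eqb_spec m j0).
  - subst. rewrite (fsum_ext _ _ (fun _ => 0)). rewrite fsum_zero. lra.
    intros j Hj. destruct (Nat.eqb_spec j j0); [lia|auto].
  - rewrite IHm by lia. lra.
Qed.
End FS.

Record km := mkKm { kw : nat; kc : nat -> R; ks : nat -> R; kA : R; kB : R }.

Definition keval (K : km) (t : R) : R :=
  fsum (kw K) (fun j => ks K j * relu (t - kc K j)) + kA K + kB K * t.

Definition kcost (K : km) : R :=
  fsum (kw K) (fun j => Rabs (ks K j) * om (kc K j)).

Definition kinterp (n : nat) (x y : nat -> R) (K : km) : Prop :=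
  forall i, (1 <= i <= n)%nat -> keval K (x i) = y i.

Lemma relu_pos t : 0 <= t -> relu t = t.
Proof. intros; unfold relu; rewrite Rmax_right; lra. Qed.
Lemma relu_neg t : t <= 0 -> relu t = 0.
Proof. intros; unfold relu; rewrite Rmax_left; lra. Qed.
Lemma relu_ge0 t : 0 <= relu t.
Proof. unfold relu; apply Rmax_l. Qed.

Lemma relu_scal r t : 0 < r -> relu (r * t) = r * relu t.
Proof.
  intros. destruct (Rle_dec 0 t).
  - rewrite !relu_pos; nra.
  - rewrite !relu_neg; nra.
Qed.

Definition nc (N : net) (j : nat) : R :=
  if Req_EM_T (nw N j) 0 then 0 else - nb N j / nw N j.
Definition nsl (N : net) (j : nat) : R := na N j * Rabs (nw N j).
Definition neA (N : net) (j : nat) : R :=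
  if Rlt_dec 0 (nw N j) then 0 else if Rlt_dec (nw N j) 0 then na N j * nb N j
  else na N j * relu (nb N j).
Definition neB (N : net) (j : nat) : R :=
  if Rlt_dec (nw N j) 0 then na N j * nw N j else 0.

Definition km_of_net (N : net) : km :=
  mkKm (width N) (nc N) (nsl N)
    (nb0 N + fsum (width N) (neA N)) (na0 N + fsum (width N) (neB N)).

Lemma neuron_id N j t :
  na N j * relu (nw N j * t + nb N j) =
  nsl N j * relu (t - nc N j) + neA N j + neB N j * t.
Proof.
  unfold nsl, nc, neA, neB.
  set (a := na N j); set (w := nw N j); set (b := nb N j).
  destruct (Rlt_dec 0 w).
  - destruct (Req_EM_T w 0); [lra|]. destruct (Rlt_dec w 0); [lra|].
    rewrite Rabs_right by lra.
    replace (w * t + b) with (w * (t - - b / w)) by (field; lra).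
    rewrite relu_scal by lra. ring.
  - destruct (Rlt_dec w 0).
    + destruct (Req_EM_T w 0); [lra|].
      rewrite Rabs_left by lra.
      replace (w * t + b) with ((-w) * (- b / w - t)) by (field; lra).
      rewrite relu_scal by lra.
      destruct (Rle_dec 0 (t - - b / w)).
      * rewrite (relu_pos (t - _)) by lra. rewrite (relu_neg (- b / w - t)) by lra.
        field; lra.
      * rewrite (relu_neg (t - _)) by lra. rewrite (relu_pos (- b / w - t)) by lra.
        field; lra.
    + assert (w = 0) by lra. destruct (Req_EM_T w 0); [|lra].
      rewrite H. replace (0 * t + b) with b by ring. rewrite Rabs_R0. ring.
Qed.

Lemma km_of_net_eval N t : keval (km_of_net N) t = net_eval N t.
Proof.
  unfold keval, net_eval, km_of_net; simpl.
  rewrite (fsum_ext _ (fun j => na N j * relu (nw N j * t + nb N j))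
             (fun j => (nsl N j * relu (t - nc N j) + neB N j * t) + neA N j)).
  2:{ intros. rewrite neuron_id. ring. }
  rewrite fsum_plus, fsum_plus.
  rewrite (fsum_ext _ (fun j => neB N j * t) (fun j => t * neB N j)) by (intros; ring).
  rewrite fsum_scal. ring.
Qed.

Lemma amgm_neuron a w b : 2 * Rabs (a * Rabs w) * om (if Req_EM_T w 0 then 0 else - b / w)
   <= a^2 + w^2 + b^2.
Proof.
  destruct (Req_EM_T w 0).
  - subst. rewrite Rabs_R0, Rmult_0_r, Rabs_R0. nra.
  - set (c := - b / w).
    assert (Hb : b = - c * w) by (unfold c; field; auto).
    pose proof (om_pos c). pose proof (om_sq c).
    rewrite Rabs_mult, Rabs_Rabsolu.
    set (r := Rabs w * om c).
    assert (Hr : r * r = w^2 + b^2).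
    { unfold r. replace (Rabs w * om c * (Rabs w * om c)) with ((Rabs w * Rabs w) * (om c * om c)) by ring.
      rewrite <- Rabs_mult, Rabs_right by nra. rewrite H0, Hb. ring. }
    assert (0 <= r) by (unfold r; pose proof (Rabs_pos w); nra).
    pose proof (Rabs_pos a).
    assert (Rabs a * Rabs a = a^2) by (rewrite <- Rabs_mult, Rabs_right by nra; ring).
    replace (2 * (Rabs a * Rabs w) * om c) with (2 * Rabs a * r) by (unfold r; ring). clearbody r c. pose proof (Rle_0_sqr (Rabs a - r)). unfold Rsqr in *. replace (a^2 + w^2 + b^2) with (Rabs a * Rabs a + r * r) by lra. nra.
Qed.

Lemma km_of_net_cost N : 2 * kcost (km_of_net N) <= net_cost N.
Proof.
  unfold kcost, net_cost, km_of_net; simpl.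
  rewrite <- fsum_scal. apply fsum_le. intros j _.
  unfold nsl, nc. rewrite <- Rmult_assoc. apply amgm_neuron.
Qed.

Definition kr (K : km) (j : nat) : R := sqrt (Rabs (ks K j) / om (kc K j)).
Definition net_of_km (K : km) : net :=
  mkNet (kw K)
    (fun j => if Req_EM_T (ks K j) 0 then 0 else ks K j / kr K j)
    (fun j => if Req_EM_T (ks K j) 0 then 0 else kr K j)
    (fun j => if Req_EM_T (ks K j) 0 then 0 else - kr K j * kc K j)
    (kB K) (kA K).

Lemma kr_pos K j : ks K j <> 0 -> 0 < kr K j.
Proof. intros. unfold kr. apply sqrt_lt_R0. pose proof (om_pos (kc K j)).
  apply Rdiv_lt_0_compat; auto. apply Rabs_pos_lt; auto. Qed.

Lemma kr_sq K j : kr K j * kr K j = Rabs (ks K j) / om (kc K j).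
Proof. unfold kr. apply sqrt_sqrt. pose proof (om_pos (kc K j)). pose proof (Rabs_pos (ks K j)).
  apply Rmult_le_pos; auto. left; apply Rinv_0_lt_compat; auto. Qed.

Lemma net_of_km_eval K t : net_eval (net_of_km K) t = keval K t.
Proof.
  unfold net_eval, keval, net_of_km; simpl.
  rewrite (fsum_ext _ _ (fun j => ks K j * relu (t - kc K j))). ring.
  intros j _. destruct (Req_EM_T (ks K j) 0).
  - rewrite e. ring.
  - pose proof (kr_pos K j n).
    replace (kr K j * t + - kr K j * kc K j) with (kr K j * (t - kc K j)) by ring.
    rewrite relu_scal by auto. field. lra.
Qed.

Lemma net_of_km_cost K : net_cost (net_of_km K) = 2 * kcost K.
Proof.
  unfold net_cost, kcost, net_of_km; simpl.
  rewrite <- fsum_scal. apply fsum_ext. intros j _.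
  destruct (Req_EM_T (ks K j) 0).
  - rewrite e, Rabs_R0. ring.
  - pose proof (kr_pos K j n). pose proof (kr_sq K j). pose proof (om_pos (kc K j)).
    pose proof (om_sq (kc K j)).
    set (r := kr K j) in *. set (s := ks K j) in *. set (o := om (kc K j)) in *.
    set (c := kc K j) in *.
    assert (Hs2 : s ^ 2 = Rabs s * Rabs s) by (rewrite <- Rabs_mult, Rabs_right by nra; ring).
    transitivity (s^2 / (r * r) + (r * r) * (1 + c^2)); [field; lra|].
    rewrite H0, <- H2, Hs2. field. split; [lra|]. apply Rabs_no_R0; auto.
Qed.

Definition kmin (n : nat) (x y : nat -> R) (K : km) : Prop :=
  kinterp n x y K /\ forall K', kinterp n x y K' -> kcost K <= kcost K'.

Lemma min_net_kmin n x y N : min_norm_interp n x y N ->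
  kmin n x y (km_of_net N) /\ forall t, keval (km_of_net N) t = net_eval N t.
Proof.
  intros [Hi Hm]. split; [split|].
  - intros i Hi'. rewrite km_of_net_eval. apply Hi; auto.
  - intros K' HK'.
    assert (interpolates n x y (net_of_km K')).
    { intros i Hi'. rewrite net_of_km_eval. apply HK'; auto. }
    pose proof (Hm _ H). rewrite net_of_km_cost in H0. pose proof (km_of_net_cost N). lra.
  - apply km_of_net_eval.
Qed.

Lemma om_le a c : 0 <= a <= c -> om a <= om c.
Proof. intros. unfold om. apply sqrt_le_1; nra. Qed.

Lemma KL1 a b c : 0 <= a -> a < b -> c < b -> relu (c - a) * om b < (b - a) * om c.
Proof.
  intros. pose proof (om_pos b). pose proof (om_pos c).
  destruct (Rle_dec c a).
  - rewrite relu_neg by lra. nra.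
  - rewrite relu_pos by lra. apply lt_sq_pos.
    + nra.
    + nra.
    + pose proof (om_sq b) as Eb. pose proof (om_sq c) as Ec.
      replace ((c - a) * om b * ((c - a) * om b)) with ((c-a)*(c-a)*(om b * om b)) by ring.
      replace ((b - a) * om c * ((b - a) * om c)) with ((b-a)*(b-a)*(om c * om c)) by ring.
      rewrite Eb, Ec.
      assert (0 <= a * (b - c)) by nra.
      assert (0 < (b - a) * c + (c - a) * b) by nra.
      nra.
Qed.

Lemma KL2 a b c : 0 <= a -> a < b -> a < c -> relu (b - c) * om a < (b - a) * om c.
Proof.
  intros. pose proof (om_pos a). pose proof (om_pos c). pose proof (om_le a c ltac:(lra)).
  destruct (Rle_dec b c).
  - rewrite relu_neg by lra. nra.
  - rewrite relu_pos by lra. nra.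
Qed.

Lemma KL3 x l q : 0 <= x -> 1 < l -> 0 <= x + l * (q - x) -> om (x + l * (q - x)) < l * om q.
Proof.
  intros Hx Hl Hp0. set (p := x + l * (q - x)) in *.
  assert (Hq : l * q = p + (l - 1) * x) by (unfold p; ring).
  clearbody p.
  pose proof (om_pos p). pose proof (om_pos q).
  apply lt_sq_pos; [lra|nra|].
  replace (l * om q * (l * om q)) with (l * l * (om q * om q)) by ring.
  rewrite !om_sq.
  assert (0 <= (l - 1) * p * x) by (apply Rmult_le_pos; [apply Rmult_le_pos|]; lra).
  assert (0 <= (l - 1) * (l - 1) * x * x) by (repeat apply Rmult_le_pos; lra).
  replace (l * l * (1 + q ^ 2)) with (l * l + (l * q) * (l * q)) by ring.
  rewrite Hq. nra.
Qed.

Lemma TRI A B c1 c2 c' : A * B < 0 -> (A + B) * c' = A * c1 + B * c2 ->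
  Rabs (A + B) * om c' < Rabs A * om c1 + Rabs B * om c2.
Proof.
  intros HAB Hc.
  pose proof (om_pos c1). pose proof (om_pos c2). pose proof (om_pos c').
  pose proof (om_sq c1). pose proof (om_sq c2). pose proof (om_sq c').
  pose proof (Rabs_pos (A+B)). pose proof (Rabs_pos A). pose proof (Rabs_pos B).
  assert (HA2 : Rabs A * Rabs A = A * A) by (rewrite <- Rabs_mult; apply Rabs_right; apply Rle_ge; apply Rle_0_sqr).
  assert (HB2 : Rabs B * Rabs B = B * B) by (rewrite <- Rabs_mult; apply Rabs_right; apply Rle_ge; apply Rle_0_sqr).
  assert (HAB2 : Rabs (A+B) * Rabs (A+B) = (A+B) * (A+B)) by (rewrite <- Rabs_mult; apply Rabs_right; apply Rle_ge; apply Rle_0_sqr).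
  assert (HABa : Rabs A * Rabs B = - (A * B)) by (rewrite <- Rabs_mult; apply Rabs_left; lra).
  assert (Hkey : 0 < om c1 * om c2 + 1 + c1 * c2).
  { assert (Hp : (om c1 * om c2) * (om c1 * om c2) = (1 + c1 * c2) * (1 + c1 * c2) + (c1 - c2) * (c1 - c2)).
    { replace ((om c1 * om c2) * (om c1 * om c2)) with ((om c1 * om c1) * (om c2 * om c2)) by ring.
      rewrite H2, H3. ring. }
    destruct (Rlt_dec 0 (1 + c1 * c2)).
    - nra.
    - assert (c1 <> c2) by (intro; subst; nra).
      assert (Hd : 0 < (c1 - c2) * (c1 - c2)) by (apply Rsqr_pos_lt; lra).
      assert (Ho : 0 < om c1 * om c2) by (apply Rmult_lt_0_compat; lra).
      replace (om c1 * om c2 + 1 + c1 * c2) with (om c1 * om c2 + (1 + c1 * c2)) by ring.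
      revert Hp Hd Ho n. generalize (om c1 * om c2) (1 + c1 * c2) ((c1 - c2) * (c1 - c2)).
      intros P Q D HP HD HP0 HQ. nra. }
  apply lt_sq_pos; [nra|nra|].
  replace (Rabs (A + B) * om c' * (Rabs (A + B) * om c')) with
    (Rabs (A+B) * Rabs (A+B) * (om c' * om c')) by ring.
  rewrite HAB2, H4.
  replace ((A + B) * (A + B) * (1 + c' ^ 2)) with ((A+B)*(A+B) + ((A+B)*c') * ((A+B)*c')) by ring.
  rewrite Hc.
  replace ((Rabs A * om c1 + Rabs B * om c2) * (Rabs A * om c1 + Rabs B * om c2)) with
    (Rabs A * Rabs A * (om c1 * om c1) + Rabs B * Rabs B * (om c2 * om c2) + 2 * (Rabs A * Rabs B) * (om c1 * om c2)) by ring.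
  rewrite HA2, HB2, HABa, H2, H3.
  assert (0 < - (A * B) * (om c1 * om c2 + 1 + c1 * c2)) by (apply Rmult_lt_0_compat; lra).
  nra.
Qed.

Lemma xlt n (x : nat -> R) (Hinc : forall i, (1<=i<n)%nat -> x i < x (S i)) :
  forall i j, (1<=i)%nat -> (i<j)%nat -> (j<=n)%nat -> x i < x j.
Proof.
  intros i j. induction j; intros; [lia|].
  destruct (Nat.eq_dec i j).
  - subst. apply Hinc; lia.
  - eapply Rlt_trans. apply IHj; lia. apply Hinc; lia.
Qed.

Lemma xle n (x : nat -> R) (Hinc : forall i, (1<=i<n)%nat -> x i < x (S i)) :
  forall i j, (1<=i)%nat -> (i<=j)%nat -> (j<=n)%nat -> x i <= x j.
Proof.
  intros. destruct (Nat.eq_dec i j). subst; lra. left; eapply xlt; eauto; lia.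
Qed.

Lemma xnn n (x : nat -> R) (Hinc : forall i, (1<=i<n)%nat -> x i < x (S i)) :
  0 <= x 1%nat -> forall i, (1 <= i <= n)%nat -> 0 <= x i.
Proof. intros. eapply Rle_trans. apply H. eapply xle; eauto; lia. Qed.

Definition ext2 (K : km) (sm : nat -> R) (c1 s1 c2 s2 A B : R) : km :=
  mkKm (S (S (kw K)))
    (fun j => if Nat.ltb j (kw K) then kc K j else if Nat.eqb j (kw K) then c1 else c2)
    (fun j => if Nat.ltb j (kw K) then sm j else if Nat.eqb j (kw K) then s1 else s2) A B.

Lemma keval_ext2 K sm c1 s1 c2 s2 A B t :
  keval (ext2 K sm c1 s1 c2 s2 A B) t =
  fsum (kw K) (fun j => sm j * relu (t - kc K j)) + s1 * relu (t - c1) + s2 * relu (t - c2) + A + B * t.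
Proof.
  unfold keval, ext2; cbn [fsum kw kc ks kA kB].
  rewrite Nat.ltb_irrefl, Nat.eqb_refl.
  replace (Nat.ltb (S (kw K)) (kw K)) with false by (symmetry; apply Nat.ltb_ge; lia).
  replace (Nat.eqb (S (kw K)) (kw K)) with false by (symmetry; apply Nat.eqb_neq; lia).
  rewrite (fsum_ext _ _ (fun j => sm j * relu (t - kc K j))). ring.
  intros j Hj. replace (Nat.ltb j (kw K)) with true by (symmetry; apply Nat.ltb_lt; lia). auto.
Qed.

Lemma kcost_ext2 K sm c1 s1 c2 s2 A B :
  kcost (ext2 K sm c1 s1 c2 s2 A B) =
  fsum (kw K) (fun j => Rabs (sm j) * om (kc K j)) + Rabs s1 * om c1 + Rabs s2 * om c2.
Proof.
  unfold kcost, ext2; cbn [fsum kw kc ks kA kB].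
  rewrite Nat.ltb_irrefl, Nat.eqb_refl.
  replace (Nat.ltb (S (kw K)) (kw K)) with false by (symmetry; apply Nat.ltb_ge; lia).
  replace (Nat.eqb (S (kw K)) (kw K)) with false by (symmetry; apply Nat.eqb_neq; lia).
  rewrite (fsum_ext _ _ (fun j => Rabs (sm j) * om (kc K j))). ring.
  intros j Hj. replace (Nat.ltb j (kw K)) with true by (symmetry; apply Nat.ltb_lt; lia). auto.
Qed.

Lemma kmin_contra n x y K K' : kmin n x y K -> kinterp n x y K' -> kcost K' < kcost K -> False.
Proof. intros [_ H] H1 H2. pose proof (H K' H1). lra. Qed.

Lemma fsum_if m (P : nat -> Prop) (dec : forall j, {P j} + {~ P j}) F G :
  fsum m (fun j => if dec j then F j else G j) =
  fsum m (fun j => if dec j then F j else 0) + fsum m (fun j => if dec j then 0 else G j).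
Proof. rewrite <- fsum_plus. apply fsum_ext. intros. destruct (dec j); ring. Qed.

Definition spR (K : km) (a : R) : R :=
  kB K + fsum (kw K) (fun k => if Rle_dec (kc K k) a then ks K k else 0).
Definition smR (K : km) (b : R) : R :=
  kB K + fsum (kw K) (fun k => if Rlt_dec (kc K k) b then ks K k else 0).
Definition inn (K : km) (a b : R) (F : nat -> R) : R :=
  fsum (kw K) (fun k => if Rlt_dec a (kc K k) then if Rlt_dec (kc K k) b then F k else 0 else 0).

Lemma F3 K a b t : a <= t <= b ->
  keval K t = keval K a + (t - a) * spR K a + inn K a b (fun k => ks K k * relu (t - kc K k)).
Proof.
  intros Ht. unfold keval, spR, inn.
  assert (fsum (kw K) (fun j => ks K j * relu (t - kc K j)) =
          fsum (kw K) (fun j => ks K j * relu (a - kc K j)) +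
          (t - a) * fsum (kw K) (fun k => if Rle_dec (kc K k) a then ks K k else 0) +
          fsum (kw K) (fun k => if Rlt_dec a (kc K k) then if Rlt_dec (kc K k) b then ks K k * relu (t - kc K k) else 0 else 0)) as E.
  { rewrite <- fsum_scal, <- !fsum_plus. apply fsum_ext. intros k _.
    destruct (Rle_dec (kc K k) a); destruct (Rlt_dec a (kc K k)); try lra.
    - rewrite !relu_pos by lra. ring.
    - destruct (Rlt_dec (kc K k) b).
      + rewrite (relu_neg (a - _)) by lra. ring.
      + rewrite !relu_neg by lra. ring. }
  rewrite E. ring.
Qed.

Lemma relu_split z : relu z = z + relu (- z).
Proof. destruct (Rle_dec 0 z); [rewrite relu_pos, relu_neg by lra | rewrite relu_neg, relu_pos by lra]; ring. Qed.

Lemma F4 K a b t : a <= t <= b ->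
  keval K t = keval K b + (t - b) * smR K b + inn K a b (fun k => ks K k * relu (kc K k - t)).
Proof.
  intros Ht. unfold keval, smR, inn.
  assert (fsum (kw K) (fun j => ks K j * relu (t - kc K j)) =
          fsum (kw K) (fun j => ks K j * relu (b - kc K j)) +
          (t - b) * fsum (kw K) (fun k => if Rlt_dec (kc K k) b then ks K k else 0) +
          fsum (kw K) (fun k => if Rlt_dec a (kc K k) then if Rlt_dec (kc K k) b then ks K k * relu (kc K k - t) else 0 else 0)) as E.
  { rewrite <- fsum_scal, <- !fsum_plus. apply fsum_ext. intros k _.
    destruct (Rlt_dec (kc K k) b); destruct (Rlt_dec a (kc K k)).
    - rewrite (relu_split (t - kc K k)). rewrite (relu_pos (b - _)) by lra.
      replace (- (t - kc K k)) with (kc K k - t) by ring. ring.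
    - rewrite !relu_pos by lra. ring.
    - rewrite !relu_neg by lra. ring.
    - rewrite !relu_neg by lra. ring. }
  rewrite E. ring.
Qed.

Lemma Fp K a b : a < b -> keval K b - keval K a = (b - a) * spR K a + inn K a b (fun k => ks K k * (b - kc K k)).
Proof.
  intros. rewrite (F3 K a b b) by lra. unfold inn.
  rewrite (fsum_ext _ (fun k => if Rlt_dec a (kc K k) then if Rlt_dec (kc K k) b then ks K k * relu (b - kc K k) else 0 else 0)
                      (fun k => if Rlt_dec a (kc K k) then if Rlt_dec (kc K k) b then ks K k * (b - kc K k) else 0 else 0)).
  ring.
  intros k _. destruct (Rlt_dec a (kc K k)); auto. destruct (Rlt_dec (kc K k) b); auto. rewrite relu_pos by lra. auto.
Qed.

Lemma Fm K a b : a < b -> keval K b - keval K a = (b - a) * smR K b - inn K a b (fun k => ks K k * (kc K k - a)).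
Proof.
  intros. rewrite (F4 K a b a) by lra. unfold inn.
  rewrite (fsum_ext _ (fun k => if Rlt_dec a (kc K k) then if Rlt_dec (kc K k) b then ks K k * relu (kc K k - a) else 0 else 0)
                      (fun k => if Rlt_dec a (kc K k) then if Rlt_dec (kc K k) b then ks K k * (kc K k - a) else 0 else 0)).
  ring.
  intros k _. destruct (Rlt_dec a (kc K k)); auto. destruct (Rlt_dec (kc K k) b); auto. rewrite relu_pos by lra. auto.
Qed.

Lemma fsum_nonneg m F : (forall j, (j < m)%nat -> 0 <= F j) -> 0 <= fsum m F.
Proof. intros H. pose proof (fsum_le m (fun _ => 0) F H). rewrite fsum_zero in H0. auto. Qed.
Lemma fsum_nonpos m F : (forall j, (j < m)%nat -> F j <= 0) -> fsum m F <= 0.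
Proof. intros H. pose proof (fsum_le m F (fun _ => 0) H). rewrite fsum_zero in H0. auto. Qed.

Lemma inn_nonneg K a b F :
  (forall k, (k < kw K)%nat -> a < kc K k < b -> 0 <= F k) -> 0 <= inn K a b F.
Proof.
  intros H. unfold inn. apply fsum_nonneg. intros k Hk.
  destruct (Rlt_dec a (kc K k)); [|lra]. destruct (Rlt_dec (kc K k) b); [|lra]. apply H; auto.
Qed.

Lemma inn_nonpos K a b F :
  (forall k, (k < kw K)%nat -> a < kc K k < b -> F k <= 0) -> inn K a b F <= 0.
Proof.
  intros H. unfold inn. apply fsum_nonpos. intros k Hk.
  destruct (Rlt_dec a (kc K k)); [|lra]. destruct (Rlt_dec (kc K k) b); [|lra]. apply H; auto.
Qed.

Definition exint (K : km) (a b : R) (pos : bool) : Prop :=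
  exists k, (k < kw K)%nat /\ a < kc K k < b /\ (if pos then 0 < ks K k else ks K k < 0).

Lemma EX1 K a b : a < b -> spR K a * (b - a) > keval K b - keval K a -> exint K a b false.
Proof.
  intros Hab H. apply NNPP; intro Hn. rewrite Fp in H by auto.
  assert (0 <= inn K a b (fun k => ks K k * (b - kc K k))).
  { apply inn_nonneg. intros k Hk Hc. assert (0 <= ks K k).
    { apply Rnot_lt_le. intro. apply Hn. exists k. auto. }
    nra. }
  nra.
Qed.

Lemma EX2 K a b : a < b -> spR K a * (b - a) < keval K b - keval K a -> exint K a b true.
Proof.
  intros Hab H. apply NNPP; intro Hn. rewrite Fp in H by auto.
  assert (inn K a b (fun k => ks K k * (b - kc K k)) <= 0).
  { apply inn_nonpos. intros k Hk Hc. assert (ks K k <= 0).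
    { apply Rnot_lt_le. intro. apply Hn. exists k. auto. }
    nra. }
  nra.
Qed.

Lemma EX3 K a b : a < b -> smR K b * (b - a) > keval K b - keval K a -> exint K a b true.
Proof.
  intros Hab H. apply NNPP; intro Hn. rewrite Fm in H by auto.
  assert (inn K a b (fun k => ks K k * (kc K k - a)) <= 0).
  { apply inn_nonpos. intros k Hk Hc. assert (ks K k <= 0).
    { apply Rnot_lt_le. intro. apply Hn. exists k. auto. }
    nra. }
  nra.
Qed.

Lemma EX4 K a b : a < b -> smR K b * (b - a) < keval K b - keval K a -> exint K a b false.
Proof.
  intros Hab H. apply NNPP; intro Hn. rewrite Fm in H by auto.
  assert (0 <= inn K a b (fun k => ks K k * (kc K k - a))).
  { apply inn_nonneg. intros k Hk Hc. assert (0 <= ks K k).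
    { apply Rnot_lt_le. intro. apply Hn. exists k. auto. }
    nra. }
  nra.
Qed.

Lemma SPSM_le K a : (forall k, (k < kw K)%nat -> kc K k = a -> ks K k <= 0) -> spR K a <= smR K a.
Proof.
  intros H. unfold spR, smR. apply Rplus_le_compat_l. apply fsum_le. intros k Hk.
  destruct (Rle_dec (kc K k) a); destruct (Rlt_dec (kc K k) a); try lra.
  apply H; auto; lra.
Qed.

Lemma SPSM_ge K a : (forall k, (k < kw K)%nat -> kc K k = a -> 0 <= ks K k) -> smR K a <= spR K a.
Proof.
  intros H. unfold spR, smR. apply Rplus_le_compat_l. apply fsum_le. intros k Hk.
  destruct (Rle_dec (kc K k) a); destruct (Rlt_dec (kc K k) a); try lra.
  apply H; auto; lra.
Qed.

Lemma SMSP K a b : a < b -> smR K b - spR K a = inn K a b (ks K).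
Proof.
  intros. unfold smR, spR, inn.
  replace (kB K + fsum (kw K) (fun k => if Rlt_dec (kc K k) b then ks K k else 0) -
    (kB K + fsum (kw K) (fun k => if Rle_dec (kc K k) a then ks K k else 0))) with
    (fsum (kw K) (fun k => if Rlt_dec (kc K k) b then ks K k else 0) -
     fsum (kw K) (fun k => if Rle_dec (kc K k) a then ks K k else 0)) by ring.
  rewrite <- fsum_minus. apply fsum_ext. intros k _.
  destruct (Rlt_dec (kc K k) b); destruct (Rle_dec (kc K k) a); destruct (Rlt_dec a (kc K k)); try lra.
Qed.

Lemma Rabs_if (P : Prop) (d : {P} + {~P}) u : Rabs (if d then u else 0) = if d then Rabs u else 0.
Proof. destruct d; auto. apply Rabs_R0. Qed.

Lemma moveL n x y K :
  (2 <= n)%nat -> 0 <= x 1%nat -> (forall i, (1<=i<n)%nat -> x i < x (S i)) -> kmin n x y K ->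
  forall k, (k < kw K)%nat -> kc K k < x 2%nat -> ks K k = 0.
Proof.
  intros Hn Hx1 Hinc Hmin k Hk Hck. apply NNPP. intro Hs.
  set (a := x 1%nat). set (b := x 2%nat).
  assert (Hab : a < b) by (apply Hinc; lia).
  set (cond := fun j => Rlt_dec (kc K j) b).
  set (sm := fun j => if cond j then 0 else ks K j).
  set (M0 := fsum (kw K) (fun j => if cond j then ks K j else 0)).
  set (M1 := fsum (kw K) (fun j => if cond j then ks K j * kc K j else 0)).
  set (W := fsum (kw K) (fun j => if cond j then ks K j * relu (kc K j - a) else 0)).
  set (w := W / (b - a)).
  set (K' := ext2 K sm b w 0 0 (kA K - M1 + w * b) (kB K + M0 - w)).
  assert (Hev : forall t, keval K' t = keval K t - fsum (kw K) (fun j => if cond j then ks K j * relu (t - kc K j) else 0)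
                   + w * relu (t - b) + (w * b - M1) + (M0 - w) * t).
  { intros t. unfold K'. rewrite keval_ext2. unfold keval.
    assert (fsum (kw K) (fun j => sm j * relu (t - kc K j)) = fsum (kw K) (fun j => ks K j * relu (t - kc K j)) -
              fsum (kw K) (fun j => if cond j then ks K j * relu (t - kc K j) else 0)) as ->.
    { rewrite <- fsum_minus. apply fsum_ext. intros j _. unfold sm. destruct (cond j); ring. }
    ring. }
  apply (kmin_contra n x y K K' Hmin).
  - intros i Hi. rewrite Hev. destruct Hmin as [HI _]. rewrite <- (HI i Hi).
    destruct (Nat.eq_dec i 1).
    + subst i. fold a.
      assert (fsum (kw K) (fun j => if cond j then ks K j * relu (a - kc K j) else 0) = W - M1 + a * M0) as ->.
      { unfold W, M1, M0. rewrite <- fsum_scal, <- fsum_minus, <- fsum_plus. apply fsum_ext. intros j _.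
        destruct (cond j); [|ring]. rewrite (relu_split (kc K j - a)). replace (- (kc K j - a)) with (a - kc K j) by ring. ring. }
      rewrite relu_neg by lra. unfold w. field. lra.
    + assert (Hb : b <= x i) by (unfold b; apply (xle n x Hinc); lia).
      assert (fsum (kw K) (fun j => if cond j then ks K j * relu (x i - kc K j) else 0) = x i * M0 - M1) as ->.
      { unfold M1, M0. rewrite <- fsum_scal, <- fsum_minus. apply fsum_ext. intros j _.
        destruct (cond j); [|ring]. rewrite relu_pos by lra. ring. }
      rewrite relu_pos by lra. ring.
  - unfold K'. rewrite kcost_ext2. rewrite Rabs_R0, Rmult_0_l, Rplus_0_r.
    assert (Hw : Rabs w * om b <= fsum (kw K) (fun j => if cond j then Rabs (ks K j) * relu (kc K j - a) * om b / (b - a) else 0)).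
    { assert (Haw : Rabs w = Rabs W / (b - a)).
      { unfold w, Rdiv. rewrite Rabs_mult, Rabs_inv, (Rabs_right (b - a)) by lra. auto. }
      pose proof (fsum_abs (kw K) (fun j => if cond j then ks K j * relu (kc K j - a) else 0)).
      assert (fsum (kw K) (fun j => if cond j then Rabs (ks K j) * relu (kc K j - a) * om b / (b - a) else 0) =
              fsum (kw K) (fun j => Rabs (if cond j then ks K j * relu (kc K j - a) else 0)) * (om b / (b - a))) as ->.
      { rewrite Rmult_comm, <- fsum_scal. apply fsum_ext. intros j _. destruct (cond j).
        - rewrite Rabs_mult, (Rabs_right (relu _)) by (apply Rle_ge, relu_ge0). field. lra.
        - rewrite Rabs_R0. ring. }
      pose proof (om_pos b). fold W in H.
      replace (Rabs w * om b) with (Rabs W * (om b / (b - a))) by (rewrite Haw; field; lra).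
      apply Rmult_le_compat_r; auto. left. apply Rdiv_lt_0_compat; lra. }
    assert (fsum (kw K) (fun j => Rabs (sm j) * om (kc K j)) +
            fsum (kw K) (fun j => if cond j then Rabs (ks K j) * relu (kc K j - a) * om b / (b - a) else 0) <
            kcost K).
    { unfold kcost. rewrite <- fsum_plus. apply (fsum_lt _ _ _ k); auto.
      - intros j _. unfold sm. destruct (cond j).
        + rewrite Rabs_R0. pose proof (KL1 a b (kc K j) Hx1 Hab r). pose proof (Rabs_pos (ks K j)).
          assert (Rabs (ks K j) * relu (kc K j - a) * om b / (b - a) <= Rabs (ks K j) * om (kc K j)).
          { apply (Rmult_le_reg_r (b - a)); [lra|]. unfold Rdiv. rewrite Rmult_assoc, Rinv_l, Rmult_1_r by lra.
            nra. }
          lra.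
        + lra.
      - unfold sm. destruct (cond k); [|contradiction].
        rewrite Rabs_R0. pose proof (KL1 a b (kc K k) Hx1 Hab r). pose proof (Rabs_pos_lt _ Hs).
        apply (Rmult_lt_reg_r (b - a)); [lra|]. unfold Rdiv.
        replace ((0 * om (kc K k) + Rabs (ks K k) * relu (kc K k - a) * om b * / (b - a)) * (b - a))
          with (Rabs (ks K k) * (relu (kc K k - a) * om b)) by (field; lra).
        nra. }
    lra.
Qed.

Lemma moveR n x y K :
  (2 <= n)%nat -> 0 <= x 1%nat -> (forall i, (1<=i<n)%nat -> x i < x (S i)) -> kmin n x y K ->
  forall k, (k < kw K)%nat -> x (n - 1)%nat < kc K k -> ks K k = 0.
Proof.
  intros Hn Hx1 Hinc Hmin k Hk Hck. apply NNPP. intro Hs.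
  set (a := x (n - 1)%nat) in *. set (b := x n).
  assert (Hab : a < b) by (unfold a, b; replace n with (S (n - 1)) at 2 by lia; apply Hinc; lia).
  assert (Ha0 : 0 <= a) by (unfold a; apply (xnn n x Hinc Hx1); lia).
  set (cond := fun j => Rlt_dec a (kc K j)).
  set (sm := fun j => if cond j then 0 else ks K j).
  set (W := fsum (kw K) (fun j => if cond j then ks K j * relu (b - kc K j) else 0)).
  set (w := W / (b - a)).
  set (K' := ext2 K sm a w 0 0 (kA K) (kB K)).
  assert (Hev : forall t, keval K' t = keval K t - fsum (kw K) (fun j => if cond j then ks K j * relu (t - kc K j) else 0)
                   + w * relu (t - a)).
  { intros t. unfold K'. rewrite keval_ext2. unfold keval.
    assert (fsum (kw K) (fun j => sm j * relu (t - kc K j)) = fsum (kw K) (fun j => ks K j * relu (t - kc K j)) -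
              fsum (kw K) (fun j => if cond j then ks K j * relu (t - kc K j) else 0)) as ->.
    { rewrite <- fsum_minus. apply fsum_ext. intros j _. unfold sm. destruct (cond j); ring. }
    ring. }
  apply (kmin_contra n x y K K' Hmin).
  - intros i Hi. rewrite Hev. destruct Hmin as [HI _]. rewrite <- (HI i Hi).
    destruct (Nat.eq_dec i n).
    + subst i. fold b. rewrite relu_pos by lra. unfold w. fold W. field. lra.
    + assert (Hb : x i <= a) by (unfold a; apply (xle n x Hinc); lia).
      rewrite (fsum_ext _ _ (fun _ => 0)), fsum_zero.
      * rewrite relu_neg by lra. ring.
      * intros j _. destruct (cond j); [|auto]. rewrite relu_neg by lra. ring.
  - unfold K'. rewrite kcost_ext2. rewrite Rabs_R0, Rmult_0_l, Rplus_0_r.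
    assert (Hw : Rabs w * om a <= fsum (kw K) (fun j => if cond j then Rabs (ks K j) * relu (b - kc K j) * om a / (b - a) else 0)).
    { assert (Haw : Rabs w = Rabs W / (b - a)).
      { unfold w, Rdiv. rewrite Rabs_mult, Rabs_inv, (Rabs_right (b - a)) by lra. auto. }
      pose proof (fsum_abs (kw K) (fun j => if cond j then ks K j * relu (b - kc K j) else 0)).
      assert (fsum (kw K) (fun j => if cond j then Rabs (ks K j) * relu (b - kc K j) * om a / (b - a) else 0) =
              fsum (kw K) (fun j => Rabs (if cond j then ks K j * relu (b - kc K j) else 0)) * (om a / (b - a))) as ->.
      { rewrite Rmult_comm, <- fsum_scal. apply fsum_ext. intros j _. destruct (cond j).
        - rewrite Rabs_mult, (Rabs_right (relu _)) by (apply Rle_ge, relu_ge0). field. lra.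
        - rewrite Rabs_R0. ring. }
      pose proof (om_pos a). fold W in H.
      replace (Rabs w * om a) with (Rabs W * (om a / (b - a))) by (rewrite Haw; field; lra).
      apply Rmult_le_compat_r; auto. left. apply Rdiv_lt_0_compat; lra. }
    assert (fsum (kw K) (fun j => Rabs (sm j) * om (kc K j)) +
            fsum (kw K) (fun j => if cond j then Rabs (ks K j) * relu (b - kc K j) * om a / (b - a) else 0) <
            kcost K).
    { unfold kcost. rewrite <- fsum_plus. apply (fsum_lt _ _ _ k); auto.
      - intros j _. unfold sm. destruct (cond j).
        + rewrite Rabs_R0. pose proof (KL2 a b (kc K j) Ha0 Hab r). pose proof (Rabs_pos (ks K j)).
          assert (Rabs (ks K j) * relu (b - kc K j) * om a / (b - a) <= Rabs (ks K j) * om (kc K j)).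
          { apply (Rmult_le_reg_r (b - a)); [lra|]. unfold Rdiv. rewrite Rmult_assoc, Rinv_l, Rmult_1_r by lra.
            nra. }
          lra.
        + lra.
      - unfold sm. destruct (cond k); [|contradiction].
        rewrite Rabs_R0. pose proof (KL2 a b (kc K k) Ha0 Hab r). pose proof (Rabs_pos_lt _ Hs).
        apply (Rmult_lt_reg_r (b - a)); [lra|]. unfold Rdiv.
        replace ((0 * om (kc K k) + Rabs (ks K k) * relu (b - kc K k) * om a * / (b - a)) * (b - a))
          with (Rabs (ks K k) * (relu (b - kc K k) * om a)) by (field; lra).
        nra. }
    lra.
Qed.

Definition smod2 (K : km) k1 A k2 B : nat -> R :=
  fun j => ks K j - (if Nat.eqb j k1 then A else 0) - (if Nat.eqb j k2 then B else 0).

Lemma smod2_eval K k1 A k2 B t : (k1 < kw K)%nat -> (k2 < kw K)%nat ->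
  fsum (kw K) (fun j => smod2 K k1 A k2 B j * relu (t - kc K j)) =
  fsum (kw K) (fun j => ks K j * relu (t - kc K j)) - A * relu (t - kc K k1) - B * relu (t - kc K k2).
Proof.
  intros H1 H2.
  rewrite <- (fsum_delta (kw K) k1 (A * relu (t - kc K k1))) by auto.
  rewrite <- (fsum_delta (kw K) k2 (B * relu (t - kc K k2))) by auto.
  rewrite <- !fsum_minus. apply fsum_ext. intros j _. unfold smod2.
  destruct (Nat.eqb_spec j k1); destruct (Nat.eqb_spec j k2); subst; ring.
Qed.

Lemma abs_sub_same s B : 0 <= s * B -> Rabs B <= Rabs s -> Rabs (s - B) = Rabs s - Rabs B.
Proof.
  intros H1 H2. destruct (Rcase_abs s); destruct (Rcase_abs B);
  repeat first [rewrite (Rabs_left s) in * by lra | rewrite (Rabs_right s) in * by lra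
    | rewrite (Rabs_left B) in * by lra | rewrite (Rabs_right B) in * by lra].
  all: try (rewrite Rabs_left by nra; nra); try (rewrite Rabs_right by nra; nra).
  all: try (rewrite Rabs_left1 by lra; lra).
Qed.

Lemma smod2_cost K k1 A k2 B : (k1 < kw K)%nat -> (k2 < kw K)%nat -> k1 <> k2 ->
  0 <= ks K k1 * A -> Rabs A <= Rabs (ks K k1) -> 0 <= ks K k2 * B -> Rabs B <= Rabs (ks K k2) ->
  fsum (kw K) (fun j => Rabs (smod2 K k1 A k2 B j) * om (kc K j)) =
  kcost K - Rabs A * om (kc K k1) - Rabs B * om (kc K k2).
Proof.
  intros H1 H2 Hne HA1 HA2 HB1 HB2. unfold kcost.
  rewrite <- (fsum_delta (kw K) k1 (Rabs A * om (kc K k1))) by auto.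
  rewrite <- (fsum_delta (kw K) k2 (Rabs B * om (kc K k2))) by auto.
  rewrite <- !fsum_minus. apply fsum_ext. intros j _. unfold smod2.
  destruct (Nat.eqb_spec j k1); destruct (Nat.eqb_spec j k2); subst; try lia.
  - replace (ks K k1 - A - 0) with (ks K k1 - A) by ring. rewrite abs_sub_same by auto. ring.
  - replace (ks K k2 - 0 - B) with (ks K k2 - B) by ring. rewrite abs_sub_same by auto. ring.
  - replace (ks K j - 0 - 0) with (ks K j) by ring. ring.
Qed.

Lemma portion s1 s2 : s1 * s2 < 0 -> exists A, 0 < s1 * A /\ Rabs A <= Rabs s1 /\ Rabs A <= Rabs s2 /\ A <> 0.
Proof.
  intros H. set (m := Rmin (Rabs s1) (Rabs s2)).
  assert (s1 <> 0) by (intro; subst; nra). assert (s2 <> 0) by (intro; subst; nra).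
  assert (0 < m) by (unfold m; apply Rmin_pos; apply Rabs_pos_lt; auto).
  assert (m <= Rabs s1) by apply Rmin_l. assert (m <= Rabs s2) by apply Rmin_r.
  destruct (Rcase_abs s1).
  - exists (- m). rewrite Rabs_Ropp, Rabs_right by lra. repeat split; try lra. nra.
  - exists m. rewrite Rabs_right by lra. repeat split; try lra. nra.
Qed.

Lemma Popp n x y K :
  (2 <= n)%nat -> 0 <= x 1%nat -> (forall i, (1<=i<n)%nat -> x i < x (S i)) -> kmin n x y K ->
  forall j k1 k2, (1 <= j <= n - 1)%nat -> (k1 < kw K)%nat -> (k2 < kw K)%nat ->
  x j < kc K k1 < x (S j) -> x j <= kc K k2 <= x (S j) -> ks K k1 * ks K k2 < 0 -> False.
Proof.
  intros Hn Hx1 Hinc Hmin j k1 k2 Hj Hk1 Hk2 Hc1 Hc2 Hs.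
  set (al := x j) in *. set (be := x (S j)) in *.
  assert (Hab : al < be) by (apply Hinc; lia).
  set (c1 := kc K k1) in *. set (c2 := kc K k2) in *.
  set (s1 := ks K k1) in *. set (s2 := ks K k2) in *.
  assert (Hne : k1 <> k2) by (intro; subst; unfold s1, s2 in Hs; nra).
  destruct (portion s1 s2 Hs) as [A [HA1 [HA2 [HA3 HA0]]]].
  assert (Hs2A : s2 * A < 0).
  { assert (0 < s1 * s1) by (apply Rsqr_pos_lt; intro; subst; nra).
    assert ((s1 * s2) * (s1 * A) < 0) by nra.
    nra. }
  set (e := Rmin (c1 - al) (be - c1)).
  assert (He : 0 < e) by (apply Rmin_pos; lra).
  assert (He1 : e <= c1 - al) by apply Rmin_l. assert (He2 : e <= be - c1) by apply Rmin_r.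
  set (rho := e / (be - al)).
  assert (Hrho : 0 < rho) by (apply Rdiv_lt_0_compat; lra).
  assert (Hrho1 : rho * (be - al) = e) by (unfold rho; field; lra).
  set (B := - A * rho / (1 + rho)).
  set (c' := c1 + rho * (c1 - c2)).
  set (Nn := A / (1 + rho)).
  assert (HNn : Nn = A + B) by (unfold Nn, B; field; lra).
  assert (Hc' : (A + B) * c' = A * c1 + B * c2) by (unfold B, c'; field; lra).
  assert (Hc'1 : al <= c' <= be).
  { unfold c'. split.
    - assert (rho * (c1 - c2) >= - e) by nra. lra.
    - assert (rho * (c1 - c2) <= e) by nra. lra. }
  assert (HsB : 0 <= s2 * B).
  { unfold B. replace (s2 * (- A * rho / (1 + rho))) with (- (s2 * A) * (rho / (1 + rho))) by (field; lra).
    apply Rmult_le_pos; [lra|]. left. apply Rdiv_lt_0_compat; lra. }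
  assert (HB : Rabs B <= Rabs s2).
  { unfold B. replace (- A * rho / (1 + rho)) with (A * (- (rho / (1 + rho)))) by (field; lra).
    assert (0 < rho / (1 + rho)) by (apply Rdiv_lt_0_compat; lra).
    rewrite Rabs_mult, (Rabs_left (- (rho / (1 + rho)))) by lra.
    assert (rho / (1 + rho) <= 1) by (apply (Rmult_le_reg_r (1 + rho)); [lra|]; unfold Rdiv; rewrite Rmult_assoc, Rinv_l by lra; lra).
    pose proof (Rabs_pos A). nra. }
  assert (HAB : A * B < 0).
  { unfold B. replace (A * (- A * rho / (1 + rho))) with (- (A * A) * (rho / (1 + rho))) by (field; lra).
    assert (0 < A * A) by (apply Rsqr_pos_lt; auto).
    assert (0 < rho / (1 + rho)) by (apply Rdiv_lt_0_compat; lra). nra. }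
  set (K' := ext2 K (smod2 K k1 A k2 B) c' Nn 0 0 (kA K) (kB K)).
  apply (kmin_contra n x y K K' Hmin).
  - intros i Hi. destruct Hmin as [HI _]. rewrite <- (HI i Hi).
    unfold K'. rewrite keval_ext2, smod2_eval by auto. unfold keval.
    fold c1 c2. rewrite Rmult_0_l.
    destruct (le_lt_dec i j).
    + assert (x i <= al) by (unfold al; apply (xle n x Hinc); lia).
      rewrite !relu_neg by lra. ring.
    + assert (be <= x i) by (unfold be; apply (xle n x Hinc); lia).
      rewrite !relu_pos by lra. rewrite HNn.
      replace ((A + B) * (x i - c')) with ((A + B) * x i - (A * c1 + B * c2)) by (rewrite <- Hc'; ring).
      ring.
  - unfold K'. rewrite kcost_ext2, smod2_cost by (auto; unfold s1, s2 in *; lra).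
    rewrite Rabs_R0, Rmult_0_l, Rplus_0_r. fold c1 c2.
    rewrite HNn. pose proof (TRI A B c1 c2 c' HAB Hc'). lra.
Qed.

Lemma Peak n x y K :
  (2 <= n)%nat -> 0 <= x 1%nat -> (forall i, (1<=i<n)%nat -> x i < x (S i)) -> kmin n x y K ->
  forall j k1 k2, (2 <= j <= n - 1)%nat -> (k1 < kw K)%nat -> (k2 < kw K)%nat ->
  x (j - 1)%nat < kc K k1 < x j -> x j < kc K k2 < x (S j) -> ks K k1 * ks K k2 < 0 -> False.
Proof.
  intros Hn Hx1 Hinc Hmin j k1 k2 Hj Hk1 Hk2 Hc1 Hc2 Hs.
  set (xL := x (j - 1)%nat) in *. set (xm := x j) in *. set (xR := x (S j)) in *.
  assert (HxL : 0 <= xL) by (unfold xL; apply (xnn n x Hinc Hx1); lia).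
  set (c1 := kc K k1) in *. set (c2 := kc K k2) in *.
  set (s1 := ks K k1) in *. set (s2 := ks K k2) in *.
  assert (Hne : k1 <> k2) by (intro; subst; unfold c1, c2 in *; lra).
  destruct (portion s1 s2 Hs) as [A [HA1 [HA2 [HA3 HA0]]]].
  assert (Hs2A : s2 * A < 0).
  { assert (0 < s1 * s1) by (apply Rsqr_pos_lt; intro; subst; nra).
    assert ((s1 * s2) * (s1 * A) < 0) by nra.
    nra. }
  set (r1 := (xm - xL) / (xm - c1)). set (r2 := (xR - xm) / (c2 - xm)).
  assert (Hr1 : 1 < r1) by (unfold r1; apply (Rmult_lt_reg_r (xm - c1)); [lra|]; unfold Rdiv; rewrite Rmult_assoc, Rinv_l by lra; lra).
  assert (Hr2 : 1 < r2) by (unfold r2; apply (Rmult_lt_reg_r (c2 - xm)); [lra|]; unfold Rdiv; rewrite Rmult_assoc, Rinv_l by lra; lra).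
  set (l := Rmin r1 r2).
  assert (Hl : 1 < l) by (unfold l; apply Rmin_glb_lt; auto).
  assert (Hl1 : l <= r1) by apply Rmin_l. assert (Hl2 : l <= r2) by apply Rmin_r.
  set (c1' := xm + l * (c1 - xm)). set (c2' := xm + l * (c2 - xm)).
  assert (Hc1' : xL <= c1').
  { unfold c1'. assert (l * (xm - c1) <= xm - xL).
    { apply (Rle_trans _ (r1 * (xm - c1))). apply Rmult_le_compat_r; lra.
      unfold r1. right. field. lra. }
    lra. }
  assert (Hc2' : c2' <= xR).
  { unfold c2'. assert (l * (c2 - xm) <= xR - xm).
    { apply (Rle_trans _ (r2 * (c2 - xm))). apply Rmult_le_compat_r; lra.
      unfold r2. right. field. lra. }
    lra. }
  assert (Hc1'm : c1' < xm) by (unfold c1'; nra).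
  assert (Hc2'm : xm < c2') by (unfold c2'; nra).
  assert (Hxm0 : 0 <= xm) by lra.
  set (K' := ext2 K (smod2 K k1 A k2 (- A)) c1' (A / l) c2' (- A / l) (kA K) (kB K)).
  apply (kmin_contra n x y K K' Hmin).
  - intros i Hi. destruct Hmin as [HI _]. rewrite <- (HI i Hi).
    unfold K'. rewrite keval_ext2, smod2_eval by auto. unfold keval.
    fold c1 c2.
    destruct (le_lt_dec i (j - 1)).
    + assert (x i <= xL) by (unfold xL; apply (xle n x Hinc); lia).
      rewrite !relu_neg by lra. ring.
    + destruct (Nat.eq_dec i j).
      * subst i. fold xm. rewrite (relu_pos (xm - c1)), (relu_neg (xm - c2)), (relu_pos (xm - c1')), (relu_neg (xm - c2')) by lra.
        unfold c1'. field. lra.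
      * assert (xR <= x i) by (unfold xR; apply (xle n x Hinc); lia).
        rewrite !relu_pos by lra. unfold c1', c2'. field. lra.
  - unfold K'. rewrite kcost_ext2, smod2_cost by (auto; unfold s1, s2 in *; try rewrite Rabs_Ropp; nra).
    fold c1 c2. rewrite Rabs_Ropp.
    assert (Habs : Rabs (- A / l) = Rabs A / l).
    { unfold Rdiv. rewrite Rabs_mult, Rabs_Ropp, Rabs_inv, (Rabs_right l) by lra. auto. }
    assert (Habs2 : Rabs (A / l) = Rabs A / l).
    { unfold Rdiv. rewrite Rabs_mult, Rabs_inv, (Rabs_right l) by lra. auto. }
    rewrite Habs, Habs2.
    pose proof (KL3 xm l c1 Hxm0 Hl ltac:(fold c1'; lra)). fold c1' in H.
    pose proof (KL3 xm l c2 Hxm0 Hl ltac:(fold c2'; lra)). fold c2' in H0.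
    pose proof (Rabs_pos_lt A HA0).
    assert (Rabs A / l * om c1' < Rabs A * om c1).
    { apply (Rmult_lt_reg_r l); [lra|]. replace (Rabs A / l * om c1' * l) with (Rabs A * om c1') by (field; lra). nra. }
    assert (Rabs A / l * om c2' < Rabs A * om c2).
    { apply (Rmult_lt_reg_r l); [lra|]. replace (Rabs A / l * om c2' * l) with (Rabs A * om c2') by (field; lra). nra. }
    lra.
Qed.

Lemma diffslope n x y K : (forall i, (1<=i<n)%nat -> x i < x (S i)) -> kmin n x y K ->
  forall j, (1 <= j <= n - 1)%nat ->
  keval K (x (S j)) - keval K (x j) = slope x y j * (x (S j) - x j).
Proof.
  intros Hinc [HI _] j Hj. rewrite !HI by lia. unfold slope.
  assert (x j < x (S j)) by (apply Hinc; lia). field. lra.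
Qed.

Ltac gethyps := idtac.

Lemma at_point_nonpos n x y K :
  (2 <= n)%nat -> 0 <= x 1%nat -> (forall i, (1<=i<n)%nat -> x i < x (S i)) -> kmin n x y K ->
  forall j, (1 <= j <= n - 1)%nat -> exint K (x j) (x (S j)) false ->
  forall k, (k < kw K)%nat -> kc K k = x j -> ks K k <= 0.
Proof.
  intros Hn Hx1 Hinc Hmin j Hj [k2 [Hk2 [Hc2 Hs2]]] k Hk Hck.
  apply Rnot_lt_le. intro Hs.
  apply (Popp n x y K Hn Hx1 Hinc Hmin j k2 k); auto.
  - assert (x j < x (S j)) by (apply Hinc; lia). lra.
  - nra.
Qed.

Lemma at_point_nonneg n x y K :
  (2 <= n)%nat -> 0 <= x 1%nat -> (forall i, (1<=i<n)%nat -> x i < x (S i)) -> kmin n x y K ->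
  forall j, (1 <= j <= n - 1)%nat -> exint K (x j) (x (S j)) true ->
  forall k, (k < kw K)%nat -> kc K k = x j -> 0 <= ks K k.
Proof.
  intros Hn Hx1 Hinc Hmin j Hj [k2 [Hk2 [Hc2 Hs2]]] k Hk Hck.
  apply Rnot_lt_le. intro Hs.
  apply (Popp n x y K Hn Hx1 Hinc Hmin j k2 k); auto.
  - assert (x j < x (S j)) by (apply Hinc; lia). lra.
  - nra.
Qed.

Lemma at_point_nonpos_l n x y K :
  (2 <= n)%nat -> 0 <= x 1%nat -> (forall i, (1<=i<n)%nat -> x i < x (S i)) -> kmin n x y K ->
  forall j, (2 <= j <= n)%nat -> exint K (x (j - 1)%nat) (x j) false ->
  forall k, (k < kw K)%nat -> kc K k = x j -> ks K k <= 0.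
Proof.
  intros Hn Hx1 Hinc Hmin j Hj [k2 [Hk2 [Hc2 Hs2]]] k Hk Hck.
  apply Rnot_lt_le. intro Hs.
  apply (Popp n x y K Hn Hx1 Hinc Hmin (j - 1) k2 k); auto; try lia;
    replace (S (j - 1)) with j by lia; auto.
  - assert (x (j - 1)%nat < x j) by lra. lra.
  - nra.
Qed.

Lemma at_point_nonneg_l n x y K :
  (2 <= n)%nat -> 0 <= x 1%nat -> (forall i, (1<=i<n)%nat -> x i < x (S i)) -> kmin n x y K ->
  forall j, (2 <= j <= n)%nat -> exint K (x (j - 1)%nat) (x j) true ->
  forall k, (k < kw K)%nat -> kc K k = x j -> 0 <= ks K k.
Proof.
  intros Hn Hx1 Hinc Hmin j Hj [k2 [Hk2 [Hc2 Hs2]]] k Hk Hck.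
  apply Rnot_lt_le. intro Hs.
  apply (Popp n x y K Hn Hx1 Hinc Hmin (j - 1) k2 k); auto; try lia;
    replace (S (j - 1)) with j by lia; auto.
  - assert (x (j - 1)%nat < x j) by lra. lra.
  - nra.
Qed.

Lemma Hslopes n x y K :
  (2 <= n)%nat -> 0 <= x 1%nat -> (forall i, (1<=i<n)%nat -> x i < x (S i)) -> kmin n x y K ->
  forall j, (2 <= j <= n - 1)%nat ->
  let d1 := slope x y (j - 1) in let d2 := slope x y j in
  Rmin d1 d2 <= spR K (x j) <= Rmax d1 d2 /\ Rmin d1 d2 <= smR K (x j) <= Rmax d1 d2.
Proof.
  intros Hn Hx1 Hinc Hmin j Hj d1 d2.
  assert (Hab : x j < x (S j)) by (apply Hinc; lia).
  assert (Hab' : x (j - 1)%nat < x j) by (replace j with (S (j - 1)) at 2 by lia; apply Hinc; lia).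
  assert (D2 : keval K (x (S j)) - keval K (x j) = d2 * (x (S j) - x j)) by (apply (diffslope n x y K Hinc Hmin); lia).
  assert (D1 : keval K (x j) - keval K (x (j - 1))%nat = d1 * (x j - x (j - 1)%nat)).
  { unfold d1. pose proof (diffslope n x y K Hinc Hmin (j - 1) ltac:(lia)) as HH.
    replace (S (j - 1)) with j in HH by lia. exact HH. }
  pose proof (Rmin_l d1 d2). pose proof (Rmin_r d1 d2). pose proof (Rmax_l d1 d2). pose proof (Rmax_r d1 d2).
  assert (Peak' : exint K (x (j - 1)%nat) (x j) true -> exint K (x j) (x (S j)) false -> False).
  { intros [k1 [Hk1 [Hc1 Hs1]]] [k2 [Hk2 [Hc2 Hs2]]].
    apply (Peak n x y K Hn Hx1 Hinc Hmin j k1 k2); auto. nra. }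
  assert (Valley' : exint K (x (j - 1)%nat) (x j) false -> exint K (x j) (x (S j)) true -> False).
  { intros [k1 [Hk1 [Hc1 Hs1]]] [k2 [Hk2 [Hc2 Hs2]]].
    apply (Peak n x y K Hn Hx1 Hinc Hmin j k1 k2); auto. nra. }
  split; split; apply Rnot_lt_le; intro Hc.
  -
    assert (X2 : exint K (x j) (x (S j)) true) by (apply EX2; auto; nra).
    pose proof (SPSM_ge K (x j) (at_point_nonneg n x y K Hn Hx1 Hinc Hmin j ltac:(lia) X2)).
    assert (X1 : exint K (x (j - 1)%nat) (x j) false) by (apply EX4; auto; nra).
    auto.
  -
    assert (X2 : exint K (x j) (x (S j)) false) by (apply EX1; auto; nra).
    pose proof (SPSM_le K (x j) (at_point_nonpos n x y K Hn Hx1 Hinc Hmin j ltac:(lia) X2)).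
    assert (X1 : exint K (x (j - 1)%nat) (x j) true) by (apply EX3; auto; nra).
    auto.
  -
    assert (X1 : exint K (x (j - 1)%nat) (x j) false) by (apply EX4; auto; nra).
    pose proof (SPSM_le K (x j) (at_point_nonpos_l n x y K Hn Hx1 Hinc Hmin j ltac:(lia) X1)).
    assert (X2 : exint K (x j) (x (S j)) true) by (apply EX2; auto; nra).
    auto.
  -
    assert (X1 : exint K (x (j - 1)%nat) (x j) true) by (apply EX3; auto; nra).
    pose proof (SPSM_ge K (x j) (at_point_nonneg_l n x y K Hn Hx1 Hinc Hmin j ltac:(lia) X1)).
    assert (X2 : exint K (x j) (x (S j)) false) by (apply EX1; auto; nra).
    auto.
Qed.

Lemma inn_le K a b F G : (forall k, (k < kw K)%nat -> a < kc K k < b -> F k <= G k) -> inn K a b F <= inn K a b G.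
Proof.
  intros H. unfold inn. apply fsum_le. intros k Hk.
  destruct (Rlt_dec a (kc K k)); [|lra]. destruct (Rlt_dec (kc K k) b); [|lra]. apply H; auto.
Qed.

Lemma inn_scal K a b F r : inn K a b F * r = inn K a b (fun k => F k * r).
Proof.
  unfold inn. rewrite Rmult_comm, <- fsum_scal. apply fsum_ext. intros k _.
  destruct (Rlt_dec a (kc K k)); [|ring]. destruct (Rlt_dec (kc K k) b); ring.
Qed.

Lemma inn_zero K a b F : (forall k, (k < kw K)%nat -> a < kc K k < b -> F k = 0) -> inn K a b F = 0.
Proof.
  intros H. unfold inn. transitivity (fsum (kw K) (fun _ => 0)); [|apply fsum_zero]. apply fsum_ext. intros k Hk.
  destruct (Rlt_dec a (kc K k)); [|auto]. destruct (Rlt_dec (kc K k) b); [|auto]. apply H; auto.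
Qed.

Lemma inn_pos_ex K a b F : 0 < inn K a b F -> exists k, (k < kw K)%nat /\ a < kc K k < b /\ 0 < F k.
Proof.
  intros H. apply NNPP. intro Hn.
  assert (inn K a b F <= 0).
  { apply inn_nonpos. intros k Hk Hc. apply Rnot_lt_le. intro. apply Hn. exists k; auto. }
  lra.
Qed.

Lemma inn_pos_of K a b F k : (forall j, (j < kw K)%nat -> a < kc K j < b -> 0 <= F j) ->
  (k < kw K)%nat -> a < kc K k < b -> 0 < F k -> 0 < inn K a b F.
Proof.
  intros H Hk Hc Hf. unfold inn. eapply Rle_lt_trans; [right; symmetry; apply (fsum_zero (kw K))|].
  apply (fsum_lt _ _ _ k); auto.
  - intros j Hj. destruct (Rlt_dec a (kc K j)); [|lra]. destruct (Rlt_dec (kc K j) b); [|lra]. apply H; auto.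
  - destruct (Rlt_dec a (kc K k)); [|lra]. destruct (Rlt_dec (kc K k) b); [|lra]. auto.
Qed.

Lemma relu_chord a b c t : a < c < b -> a <= t <= b -> relu (t - c) * (b - a) <= (b - c) * (t - a).
Proof.
  intros. destruct (Rle_dec t c).
  - rewrite relu_neg by lra. nra.
  - rewrite relu_pos by lra. nra.
Qed.

Lemma delta_slope n x y k : (1 <= k <= n - 1)%nat -> delta n x y k = slope x y k.
Proof.
  intros. unfold delta. destruct (Nat.eqb_spec k 0); [lia|]. destruct (Nat.eqb_spec k n); [lia|]. auto.
Qed.

Lemma curv_spec n x y i : (2 <= i <= n - 1)%nat ->
  curv n x y i = (if Rlt_dec (slope x y (i - 1)) (slope x y i) then 1%Z
                  else if Rlt_dec (slope x y i) (slope x y (i - 1)) then (-1)%Z else 0%Z).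
Proof.
  intros. unfold curv. rewrite !delta_slope by lia. auto.
Qed.

Lemma partI n x y K :
  (2 <= n)%nat -> 0 <= x 1%nat -> (forall i, (1<=i<n)%nat -> x i < x (S i)) -> kmin n x y K ->
  forall t, t < x 2%nat -> keval K t = gseg x y 1 t.
Proof.
  intros Hn Hx1 Hinc Hmin t Ht.
  pose proof (moveL n x y K Hn Hx1 Hinc Hmin) as HL.
  assert (Hab : x 1%nat < x 2%nat) by (apply Hinc; lia).
  assert (Z : forall u, u <= x 2%nat -> keval K u = keval K (x 2%nat) + (u - x 2%nat) * smR K (x 2%nat)).
  { intros u Hu. rewrite (F4 K u (x 2%nat) u) by lra.
    rewrite inn_zero. ring. intros k Hk Hc. rewrite HL by (auto; lra). ring. }
  destruct Hmin as [HI _].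
  pose proof (Z (x 1%nat) ltac:(lra)) as Z1.
  rewrite Z by lra. rewrite !HI in * by lia.
  unfold gseg, slope. replace (S 1) with 2%nat by lia.
  assert (smR K (x 2%nat) = (y 2%nat - y 1%nat) / (x 2%nat - x 1%nat)).
  { rewrite Z1. field. lra. }
  rewrite H. field. lra.
Qed.

Lemma partII n x y K :
  (2 <= n)%nat -> 0 <= x 1%nat -> (forall i, (1<=i<n)%nat -> x i < x (S i)) -> kmin n x y K ->
  forall t, x (n - 1)%nat <= t -> keval K t = gseg x y (n - 1) t.
Proof.
  intros Hn Hx1 Hinc Hmin t Ht.
  pose proof (moveR n x y K Hn Hx1 Hinc Hmin) as HR.
  assert (Hab : x (n - 1)%nat < x n) by (replace n with (S (n - 1)) at 2 by lia; apply Hinc; lia).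
  assert (Z : forall u, x (n - 1)%nat <= u -> keval K u = keval K (x (n - 1)%nat) + (u - x (n - 1)%nat) * spR K (x (n - 1)%nat)).
  { intros u Hu. rewrite (F3 K (x (n - 1)%nat) u u) by lra.
    rewrite inn_zero. ring. intros k Hk Hc. rewrite HR by (auto; lra). ring. }
  destruct Hmin as [HI _].
  pose proof (Z (x n) ltac:(lra)) as Z1.
  rewrite Z by lra. rewrite !HI in * by lia.
  unfold gseg, slope. replace (S (n - 1)) with n by lia.
  assert (spR K (x (n - 1)%nat) = (y n - y (n - 1)%nat) / (x n - x (n - 1)%nat)).
  { rewrite Z1. field. lra. }
  rewrite H. field. lra.
Qed.

Lemma cv1 p q : (if Rlt_dec p q then 1%Z else if Rlt_dec q p then (-1)%Z else 0%Z) = 1%Z -> p < q.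
Proof. destruct (Rlt_dec p q); auto; destruct (Rlt_dec q p); discriminate. Qed.
Lemma cvm1 p q : (if Rlt_dec p q then 1%Z else if Rlt_dec q p then (-1)%Z else 0%Z) = (-1)%Z -> q < p.
Proof. destruct (Rlt_dec p q); [discriminate|]; destruct (Rlt_dec q p); auto; discriminate. Qed.
Lemma cv1' p q : p < q -> (if Rlt_dec p q then 1%Z else if Rlt_dec q p then (-1)%Z else 0%Z) = 1%Z.
Proof. destruct (Rlt_dec p q); auto; lra. Qed.
Lemma cvm1' p q : q < p -> (if Rlt_dec p q then 1%Z else if Rlt_dec q p then (-1)%Z else 0%Z) = (-1)%Z.
Proof. destruct (Rlt_dec p q); [lra|]; destruct (Rlt_dec q p); auto; lra. Qed.

Lemma partIII n x y K :
  (2 <= n)%nat -> 0 <= x 1%nat -> (forall i, (1<=i<n)%nat -> x i < x (S i)) -> kmin n x y K ->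
  forall i t, (2 <= i <= n - 2)%nat -> x i <= t < x (S i) ->
     (curv n x y i = 1%Z /\ curv n x y (S i) = 1%Z ->
        Rmax (gseg x y (i - 1) t) (gseg x y (S i) t) <= keval K t <= gseg x y i t) /\
     (curv n x y i = (-1)%Z /\ curv n x y (S i) = (-1)%Z ->
        gseg x y i t <= keval K t <= Rmin (gseg x y (i - 1) t) (gseg x y (S i) t)) /\
     (~ (curv n x y i = 1%Z /\ curv n x y (S i) = 1%Z) ->
      ~ (curv n x y i = (-1)%Z /\ curv n x y (S i) = (-1)%Z) ->
        keval K t = gseg x y i t).
Proof.
  intros Hn Hx1 Hinc Hmin i t Hi Ht.
  set (a := x i) in *. set (b := x (S i)) in *.
  assert (Hab : a < b) by (apply Hinc; lia).
  assert (Hpa : x (i - 1)%nat < a) by (unfold a; replace i with (S (i - 1)) at 2 by lia; apply Hinc; lia).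
  set (d0 := slope x y (i - 1)). set (d1 := slope x y i). set (d2 := slope x y (S i)).
  set (sg := spR K a). set (tau := smR K b).
  destruct (Hslopes n x y K Hn Hx1 Hinc Hmin i ltac:(lia)) as [[Hs1 Hs2] _].
  fold a d0 d1 sg in Hs1, Hs2.
  destruct (Hslopes n x y K Hn Hx1 Hinc Hmin (S i) ltac:(lia)) as [_ [Ht1 Ht2]].
  replace (S i - 1)%nat with i in Ht1, Ht2 by lia. fold b d1 d2 tau in Ht1, Ht2.
  pose proof (Rmin_l d0 d1). pose proof (Rmin_r d0 d1). pose proof (Rmax_l d0 d1). pose proof (Rmax_r d0 d1).
  pose proof (Rmin_l d1 d2). pose proof (Rmin_r d1 d2). pose proof (Rmax_l d1 d2). pose proof (Rmax_r d1 d2).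
  rewrite (curv_spec n x y i) by lia. rewrite (curv_spec n x y (S i)) by lia.
  replace (S i - 1)%nat with i by lia. fold d0 d1 d2.
  destruct Hmin as [HI Hmm]. assert (Hmin : kmin n x y K) by (split; auto).
  assert (Ya : keval K a = y i) by (apply HI; lia).
  assert (Yb : keval K b = y (S i)) by (apply HI; lia).
  assert (Hd1 : y (S i) - y i = d1 * (b - a)) by (unfold d1, slope; fold a b; field; lra).
  assert (G1 : gseg x y i t = y i + d1 * (t - a)) by (unfold gseg; fold a d1; ring).
  assert (G0 : gseg x y (i - 1) t = y i + d0 * (t - a)).
  { unfold gseg, d0, slope. replace (S (i - 1)) with i by lia. fold a. field. lra. }
  assert (G2 : gseg x y (S i) t = y (S i) + d2 * (t - b)) by (unfold gseg; fold b d2; ring).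
  rewrite G0, G1, G2.
  set (J := inn K a b (fun k => ks K k * relu (t - kc K k))).
  set (J' := inn K a b (fun k => ks K k * relu (kc K k - t))).
  set (Jb := inn K a b (fun k => ks K k * (b - kc K k))).
  set (Ja := inn K a b (fun k => ks K k * (kc K k - a))).
  assert (HF3 : keval K t = y i + (t - a) * sg + J) by (rewrite <- Ya; unfold J, sg; apply F3; lra).
  assert (HF4 : keval K t = y (S i) + (t - b) * tau + J') by (rewrite <- Yb; unfold J', tau; apply F4; lra).
  assert (HFp : y (S i) - y i = (b - a) * sg + Jb) by (rewrite <- Ya, <- Yb; apply Fp; auto).
  assert (HFm : y (S i) - y i = (b - a) * tau - Ja) by (rewrite <- Ya, <- Yb; apply Fm; auto).
  assert (HPQ : (forall k, (k < kw K)%nat -> a < kc K k < b -> 0 <= ks K k) \/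
                (forall k, (k < kw K)%nat -> a < kc K k < b -> ks K k <= 0)).
  { destruct (classic (exint K a b true)) as [[k1 [Hk1 [Hc1 Hp1]]] | Hn'].
    - left. intros k Hk Hc. apply Rnot_lt_le. intro Hneg.
      apply (Popp n x y K Hn Hx1 Hinc Hmin i k1 k); auto; try lia; unfold a, b in *; try lra. nra.
    - right. intros k Hk Hc. apply Rnot_lt_le. intro Hp. apply Hn'. exists k; auto. }
  assert (Hchord : J * (b - a) <= Jb * (t - a) \/ J * (b - a) >= Jb * (t - a)).
  { lra. }
  destruct HPQ as [P | Q].
  -
    assert (HJ : 0 <= J) by (apply inn_nonneg; intros; pose proof (relu_ge0 (t - kc K k)); pose proof (P k H7 H8); nra).
    assert (HJ' : 0 <= J') by (apply inn_nonneg; intros; pose proof (relu_ge0 (kc K k - t)); pose proof (P k H7 H8); nra).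
    assert (HJb : 0 <= Jb) by (apply inn_nonneg; intros; pose proof (P k H7 H8); nra).
    assert (HJa : 0 <= Ja) by (apply inn_nonneg; intros; pose proof (P k H7 H8); nra).
    assert (HC : J * (b - a) <= Jb * (t - a)).
    { unfold J, Jb. rewrite !inn_scal. apply inn_le. intros k Hk Hc.
      pose proof (relu_chord a b (kc K k) t Hc ltac:(lra)). pose proof (P k Hk Hc). nra. }
    assert (HJab : 0 < Jb -> 0 < Ja).
    { intros Hp. destruct (inn_pos_ex _ _ _ _ Hp) as [k [Hk [Hc Hf]]].
      apply (inn_pos_of _ _ _ _ k); auto.
      - intros j Hj Hcj. pose proof (P j Hj Hcj). nra.
      - assert (0 < ks K k) by nra. nra. }
    assert (Hsg : sg <= d1) by nra.
    assert (Htau : d1 <= tau) by nra.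
    assert (HJt : J <= (d1 - sg) * (t - a)).
    { apply (Rmult_le_reg_r (b - a)); [lra|]. assert (Jb = (d1 - sg) * (b - a)) by lra. nra. }
    split; [|split].
    + intros [C1 C2]. apply cv1 in C1. apply cv1 in C2.
      assert (d0 <= sg) by (rewrite Rmin_left in Hs1 by lra; auto).
      assert (tau <= d2) by (rewrite Rmax_right in Ht2 by lra; auto).
      split; [apply Rmax_lub|].
      * rewrite HF3. assert (0 <= (t - a) * (sg - d0)) by (apply Rmult_le_pos; lra). nra.
      * rewrite HF4. assert (0 <= (b - t) * (d2 - tau)) by (apply Rmult_le_pos; lra). nra.
      * rewrite HF3. nra.
    + intros [C1 C2]. apply cvm1 in C1. apply cvm1 in C2.
      assert (sg = d1) by (rewrite Rmin_right in Hs1 by lra; lra).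
      assert (Jb = 0) by nra. assert (J = 0) by nra.
      assert (E : keval K t = y i + d1 * (t - a)) by (rewrite HF3; nra).
      rewrite E. split; [lra|]. apply Rmin_glb.
      * assert (0 <= (t - a) * (d0 - d1)) by (apply Rmult_le_pos; lra). nra.
      * assert (0 <= (b - t) * (d1 - d2)) by (apply Rmult_le_pos; lra). nra.
    + intros N1 N2.
      destruct (Req_dec Jb 0) as [HJ0|HJ0].
      * assert (sg = d1) by nra. assert (J = 0) by nra. rewrite HF3. nra.
      * exfalso. apply N1.
        assert (sg < d1) by nra. assert (0 < Ja) by (apply HJab; lra). assert (d1 < tau) by nra.
        assert (d0 < d1).
        { apply Rnot_le_lt. intro. rewrite Rmin_right in Hs1 by lra. lra. }
        assert (d1 < d2).
        { apply Rnot_le_lt. intro. rewrite Rmax_left in Ht2 by lra. lra. }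
        split; apply cv1'; auto.
  -
    assert (HJ : J <= 0) by (apply inn_nonpos; intros; pose proof (relu_ge0 (t - kc K k)); pose proof (Q k H7 H8); nra).
    assert (HJ' : J' <= 0) by (apply inn_nonpos; intros; pose proof (relu_ge0 (kc K k - t)); pose proof (Q k H7 H8); nra).
    assert (HJb : Jb <= 0) by (apply inn_nonpos; intros; pose proof (Q k H7 H8); nra).
    assert (HJa : Ja <= 0) by (apply inn_nonpos; intros; pose proof (Q k H7 H8); nra).
    assert (HC : J * (b - a) >= Jb * (t - a)).
    { apply Rle_ge. unfold J, Jb. rewrite !inn_scal. apply inn_le. intros k Hk Hc.
      pose proof (relu_chord a b (kc K k) t Hc ltac:(lra)). pose proof (Q k Hk Hc). nra. }
    assert (HJab : Jb < 0 -> Ja < 0).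
    { intros Hp. assert (0 < inn K a b (fun k => - (ks K k * (b - kc K k)))).
      { unfold Jb in Hp. replace (inn K a b (fun k => - (ks K k * (b - kc K k)))) with
          (inn K a b (fun k => ks K k * (b - kc K k)) * (-1)) by (rewrite inn_scal; unfold inn; apply fsum_ext; intros; 
          destruct (Rlt_dec a (kc K j)); [|ring]; destruct (Rlt_dec (kc K j) b); ring). lra. }
      destruct (inn_pos_ex _ _ _ _ H7) as [k [Hk [Hc Hf]]].
      assert (0 < inn K a b (fun k => - (ks K k * (kc K k - a)))).
      { apply (inn_pos_of _ _ _ _ k); auto.
        - intros j Hj Hcj. pose proof (Q j Hj Hcj). nra.
        - assert (ks K k < 0) by nra. nra. }
      replace (inn K a b (fun k => - (ks K k * (kc K k - a)))) with (Ja * (-1)) in H8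
        by (unfold Ja; rewrite inn_scal; unfold inn; apply fsum_ext; intros;
            destruct (Rlt_dec a (kc K j)); [|ring]; destruct (Rlt_dec (kc K j) b); ring).
      lra. }
    assert (Hsg : d1 <= sg) by nra.
    assert (Htau : tau <= d1) by nra.
    assert (HJt : (d1 - sg) * (t - a) <= J).
    { apply (Rmult_le_reg_r (b - a)); [lra|]. assert (Jb = (d1 - sg) * (b - a)) by lra. nra. }
    split; [|split].
    + intros [C1 C2]. apply cv1 in C1. apply cv1 in C2.
      assert (sg = d1) by (rewrite Rmax_right in Hs2 by lra; lra).
      assert (Jb = 0) by nra. assert (J = 0) by nra.
      assert (E : keval K t = y i + d1 * (t - a)) by (rewrite HF3; nra).
      rewrite E. split; [|lra]. apply Rmax_lub.
      * assert (0 <= (t - a) * (d1 - d0)) by (apply Rmult_le_pos; lra). nra.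
      * assert (0 <= (b - t) * (d2 - d1)) by (apply Rmult_le_pos; lra). nra.
    + intros [C1 C2]. apply cvm1 in C1. apply cvm1 in C2.
      assert (sg <= d0) by (rewrite Rmax_left in Hs2 by lra; auto).
      assert (d2 <= tau) by (rewrite Rmin_right in Ht1 by lra; auto).
      split; [|apply Rmin_glb].
      * rewrite HF3. nra.
      * rewrite HF3. assert (0 <= (t - a) * (d0 - sg)) by (apply Rmult_le_pos; lra). nra.
      * rewrite HF4. assert (0 <= (b - t) * (tau - d2)) by (apply Rmult_le_pos; lra). nra.
    + intros N1 N2.
      destruct (Req_dec Jb 0) as [HJ0|HJ0].
      * assert (sg = d1) by nra. assert (J = 0) by nra. rewrite HF3. nra.
      * exfalso. apply N2.
        assert (d1 < sg) by nra. assert (Ja < 0) by (apply HJab; lra). assert (tau < d1) by nra.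
        assert (d1 < d0).
        { apply Rnot_le_lt. intro. rewrite Rmax_right in Hs2 by lra. lra. }
        assert (d2 < d1).
        { apply Rnot_le_lt. intro. rewrite Rmin_left in Ht1 by lra. lra. }
        split; apply cvm1'; auto.
Qed.

Theorem lemma2 (n : nat) (x y : nat -> R) (N : net) :
  (2 <= n)%nat ->
  0 <= x 1%nat ->
  (forall i, (1 <= i < n)%nat -> x i < x (S i)) ->
  min_norm_interp n x y N ->
  (forall t, t < x 2%nat -> net_eval N t = gseg x y 1 t) /\
  (forall t, x (n - 1)%nat <= t -> net_eval N t = gseg x y (n - 1) t) /\
  (forall i t, (2 <= i <= n - 2)%nat -> x i <= t < x (S i) ->
     (curv n x y i = 1%Z /\ curv n x y (S i) = 1%Z ->
        Rmax (gseg x y (i - 1) t) (gseg x y (S i) t) <= net_eval N t <= gseg x y i t) /\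
     (curv n x y i = (-1)%Z /\ curv n x y (S i) = (-1)%Z ->
        gseg x y i t <= net_eval N t <= Rmin (gseg x y (i - 1) t) (gseg x y (S i) t)) /\
     (~ (curv n x y i = 1%Z /\ curv n x y (S i) = 1%Z) ->
      ~ (curv n x y i = (-1)%Z /\ curv n x y (S i) = (-1)%Z) ->
        net_eval N t = gseg x y i t)).
Proof.
  intros Hn Hx1 Hinc Hmin.
  destruct (min_net_kmin n x y N Hmin) as [HK Hev].
  split; [|split].
  - intros t Ht. rewrite <- Hev. apply (partI n x y _ Hn Hx1 Hinc HK); auto.
  - intros t Ht. rewrite <- Hev. apply (partII n x y _ Hn Hx1 Hinc HK); auto.
  - intros i t Hi Ht. rewrite <- !Hev. apply (partIII n x y _ Hn Hx1 Hinc HK); auto.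
Qed.
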